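(* Let $\Gamma$ be a weighted digraph with Kirchhoff matrix $L$, out-forest dimension $d$, and normalized matrix of maximum out-forests $\bar J$. Then $\operatorname{rank}\bar J=d$, $\bar J^2=\bar J$, and $L\bar J=\bar J L=0$.
   Context: A weighted digraph $\Gamma$ has vertex set $\{1,\dots,n\}$, no loops, and each arc $j\to i$ ($j\ne i$) has a positive weight $a_{ij}$; $a_{ij}=0$ if there is no such arc. Its Kirchhoff matrix $L=[\ell_{ij}]$ has $\ell_{ij}=-a_{ij}$ for $j\ne i$ and $\ell_{ii}=\sum_{k\ne i}a_{ik}$. A diverging tree is a rooted directed tree with directed paths from its root to all its other vertices; an out-forest of $\Gamma$ is a spanning subgraph whose weak components are diverging trees; a maximum out-forest is an out-forest with the maximum number of arcs; the out-forest dimension $d$ is the number of trees in a maximum out-forest. The weight of a subgraph is the product of the weights of its arcs. The normalized matrix of maximum out-forests $\bar J=[\bar J_{ij}]$ is defined by: $\bar J_{ij}$ equals the total weight of those maximum out-forests of $\Gamma$ in which vertex $i$ belongs to the tree whose root is $j$, divided by the total weight of all maximum out-forests of $\Gamma$. *)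

(* Defs.v *)
From HB Require Import structures.
From mathcomp Require Import all_boot all_order all_algebra.
Set Implicit Arguments. Unset Strict Implicit. Unset Printing Implicit Defensive.
Import Order.TTheory GRing.Theory Num.Theory.
Local Open Scope ring_scope.

Section Digraph.
Variables (R : realFieldType) (n : nat) (a : 'M[R]_n).

(* A weighted digraph on 'I_n: arc j -> i (j != i) iff a i j <> 0 (weights
   are assumed positive on arcs, i.e. nonnegative off the diagonal).
   An arc j -> i is represented by the pair (j, i). *)
Definition arcs : {set 'I_n * 'I_n} :=
  [set e | (e.1 != e.2) && (a e.2 e.1 != 0)].

Definition kirchhoff : 'M[R]_n :=
  \matrix_(i, j) if i == j then \sum_(k | k != i) a i k else - a i j.

Definition frel_of (F : {set 'I_n * 'I_n}) : rel 'I_n :=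
  fun x y => (x, y) \in F.

(* F is an out-forest: a spanning subgraph of the digraph whose weak
   components are diverging trees; equivalently every vertex has in-degree
   at most one in F and F has no directed cycle. *)
Definition out_forest (F : {set 'I_n * 'I_n}) : bool :=
  [&& F \subset arcs,
      [forall i : 'I_n, #|[set e in F | e.2 == i]| <= 1]%N &
      [forall e in F, ~~ connect (frel_of F) e.2 e.1]].

Definition roots_of (F : {set 'I_n * 'I_n}) : {set 'I_n} :=
  [set v | [forall e in F, e.2 != v]].

Definition in_tree_of (F : {set 'I_n * 'I_n}) (i j : 'I_n) : bool :=
  (j \in roots_of F) && connect (frel_of F) j i.

Definition max_out_forest (F : {set 'I_n * 'I_n}) : bool :=
  out_forest F &&
  [forall F' : {set 'I_n * 'I_n}, out_forest F' ==> (#|F'| <= #|F|)%N].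

Definition weight (F : {set 'I_n * 'I_n}) : R := \prod_(e in F) a e.2 e.1.

Definition Jbar : 'M[R]_n :=
  \matrix_(i, j)
    ((\sum_(F : {set 'I_n * 'I_n} | max_out_forest F && in_tree_of F i j) weight F)
     / (\sum_(F : {set 'I_n * 'I_n} | max_out_forest F) weight F)).

End Digraph.

(* Main.v *)
Require Import Defs.
From HB Require Import structures.
From mathcomp Require Import all_boot all_order all_algebra.
From mathcomp Require Import ring lra zify.
Import Order.TTheory GRing.Theory Num.Theory.
Set Implicit Arguments. Unset Strict Implicit. Unset Printing Implicit Defensive.

Section Graph.
Variable n : nat.
Implicit Types (F G H : {set 'I_n * 'I_n}) (x y z u v p j k : 'I_n).

Notation reach F := (connect (frel_of F)).

Lemma reach_ind F (P : 'I_n -> Prop) x :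
  P x -> (forall y z, reach F x y -> (y, z) \in F -> P y -> P z) ->
  forall y, reach F x y -> P y.
Proof.
move=> Px step y /connectP [q pq ->] {y}.
suff H : forall q y, reach F x y -> P y -> path (frel_of F) y q -> P (last y q).
  by apply: H => //; exact: connect0.
elim=> [|z r IH] y rxy Py //= /andP [yz pr].
apply: IH pr; first exact: connect_trans rxy (connect1 yz).
exact: step rxy yz Py.
Qed.

Lemma reach_step F x y z : reach F x y -> (y, z) \in F -> reach F x z.
Proof. by move=> rxy yz; apply: connect_trans rxy (connect1 _). Qed.

Lemma reach_sub F G : F \subset G -> forall x y, reach F x y -> reach G x y.
Proof.
move=> sFG x; apply: reach_ind; first exact: connect0.
by move=> y z _ yz; move/(reach_step)=> /(_ z); apply; apply: (subsetP sFG).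
Qed.

Lemma reach_last F x y : reach F x y -> x != y ->
  exists2 p, (p, y) \in F & reach F x p.
Proof.
move: y; apply: reach_ind => [|y z rxy yz _ _]; first by rewrite eqxx.
by exists y.
Qed.

End Graph.

Section Forest.
Variables (R : realFieldType) (n : nat) (a : 'M[R]_n).
Implicit Types (F G H : {set 'I_n * 'I_n}) (x y z u v p j k : 'I_n).
Notation reach F := (connect (frel_of F)).

Definition indeg1 F := forall x y z, (x, z) \in F -> (y, z) \in F -> x = y.
Definition acyc F := forall x y, (x, y) \in F -> ~~ reach F y x.

Lemma out_forestP F :
  reflect [/\ F \subset arcs a, indeg1 F & acyc F] (out_forest a F).
Proof.
apply: (iffP and3P) => [[sF /forallP d1 /forall_inP ac] | [sF d1 ac]].
  split=> // [x y z xz yz | x y xy].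
    have /card_le1_eqP E := d1 z.
    have := E (x, z) (y, z); rewrite !inE xz yz !eqxx => /(_ isT isT).
    by case.
  exact: (ac (x, y)).
split=> //.
  apply/forallP => i; apply/card_le1_eqP => [[x1 x2]] [y1 y2].
  rewrite !inE /= => /andP [e1 /eqP E1] /andP [e2 /eqP E2].
  by subst; rewrite (d1 _ _ _ e1 e2).
by apply/forall_inP => [[x y]] /ac.
Qed.

Lemma forest_sub F G : out_forest a F -> G \subset F -> out_forest a G.
Proof.
move=> /out_forestP [sF d1 ac] sGF; apply/out_forestP; split.
- exact: subset_trans sGF sF.
- by move=> x y z /(subsetP sGF) xz /(subsetP sGF) yz; apply: d1 xz yz.
- move=> x y /(subsetP sGF) /ac; apply: contra; exact: reach_sub.
Qed.

Lemma rootsP F v : reflect (forall u, (u, v) \notin F) (v \in roots_of F).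
Proof.
rewrite inE; apply: (iffP forall_inP) => [H u | H [x y] e].
  by apply/negP => /H /=; rewrite eqxx.
by apply/eqP => /= E; subst; move: (H x); rewrite e.
Qed.

Lemma root_reach F x j : j \in roots_of F -> reach F x j -> x = j.
Proof.
move=> /rootsP rj rxj; apply/eqP; apply/negPn/negP => nxj.
by case: (reach_last rxj nxj) => p pj _; move: (rj p); rewrite pj.
Qed.

Lemma chain F u w x : indeg1 F -> reach F u x -> reach F w x ->
  reach F u w || reach F w u.
Proof.
move=> d1; move: x; apply: reach_ind => [rwu|y z ruy yz IH rwz]; first by rewrite rwu orbT.
have [->|nwz] := eqVneq w z; first by rewrite (reach_step ruy yz).
case: (reach_last rwz nwz) => q qz rwq.
by rewrite (d1 _ _ _ qz yz) in rwq; apply: IH.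
Qed.

Lemma root_exists F i : acyc F -> exists2 j, j \in roots_of F & reach F j i.
Proof.
move=> ac.
pose anc y := [set z | reach F z y].
have ri : reach F i i by exact: connect0.
case: (@arg_minnP _ i (fun y => reach F y i) (fun y => #|anc y|) ri) => j rji jmin.
exists j => //; apply/rootsP => p; apply/negP => pj.
have rpi : reach F p i by apply: connect_trans (connect1 pj) rji.
have := jmin p rpi; apply/negP; rewrite -ltnNge.
apply: proper_card; apply/properP; split.
  by apply/subsetP => z; rewrite !inE => rzp; apply: reach_step rzp pj.
exists j; first by rewrite inE connect0.
by rewrite inE; exact: ac _ _ pj.
Qed.

Lemma tree_uniq F i j j' : indeg1 F ->
  in_tree_of F i j -> in_tree_of F i j' -> j = j'.
Proof.
move=> d1 /andP [rj rji] /andP [rj' rj'i].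
case/orP: (chain d1 rji rj'i) => r.
  by rewrite (root_reach rj' r).
by rewrite (root_reach rj r).
Qed.

Lemma tree_ex F i : acyc F -> exists j, in_tree_of F i j.
Proof. by move=> ac; case: (root_exists i ac) => j rj rji; exists j; apply/andP. Qed.

Lemma tree_reach F x y j : in_tree_of F x j -> reach F x y -> in_tree_of F y j.
Proof. by move=> /andP [rj rjx] rxy; rewrite /in_tree_of rj (connect_trans rjx rxy). Qed.

Lemma tree_root F j : j \in roots_of F -> in_tree_of F j j.
Proof. by move=> rj; rewrite /in_tree_of rj connect0. Qed.


Lemma acyc_add F u v : acyc F -> ~~ reach F v u -> acyc ((u, v) |: F).
Proof.
move=> ac nvu; set G := (u, v) |: F.
have inv1 y z : reach G y z -> reach F y z || reach F v z.
  move: z; apply: reach_ind; first by rewrite connect0.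
  move=> z z' _; rewrite !inE => /orP [/eqP [-> ->]|zz'] IH; first by rewrite connect0 orbT.
  by case/orP: IH => r; rewrite (reach_step r zz') ?orbT.
have inv2 y z : reach F v y -> reach G y z -> reach F y z.
  move=> rvy rG; suff: reach F y z && reach F v z by case/andP.
  move: z rG; apply: reach_ind; first by rewrite connect0 rvy.
  move=> z z' _; rewrite !inE => /orP [/eqP [-> ->]|zz'] /andP [ryz rvz].
    by rewrite rvz in nvu.
  by rewrite (reach_step ryz zz') (reach_step rvz zz').
move=> x y; rewrite !inE => /orP [/eqP [-> ->]|xy]; apply/negP => ryx.
  by move: (inv2 _ _ (connect0 _ v) ryx); rewrite (negbTE nvu).
case rvy: (reach F v y).
  by move: (ac _ _ xy); rewrite (inv2 _ _ rvy ryx).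
case/orP: (inv1 _ _ ryx) => r; first by move: (ac _ _ xy); rewrite r.
by rewrite (reach_step r xy) in rvy.
Qed.

Lemma reach_rm F p v y x : ~~ reach F v x -> reach F y x -> reach (F :\ (p, v)) y x.
Proof.
move=> nvx ryx.
suff: reach F v x || reach (F :\ (p, v)) y x by rewrite (negbTE nvx).
move: x ryx {nvx}; apply: reach_ind; first by rewrite connect0 orbT.
move=> z z' _ zz' /orP [rvz|ryz]; first by rewrite (reach_step rvz zz').
have [->|nz'v] := eqVneq z' v; first by rewrite connect0.
by rewrite (reach_step ryz) ?orbT // !inE zz' andbT; apply: contra nz'v => /eqP [_ ->].
Qed.

Lemma reach_rm2 F p v x : acyc F -> (p, v) \in F -> reach F v x ->
  reach (F :\ (p, v)) v x.
Proof.
move=> ac pv rvx.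
suff: reach F v x && reach (F :\ (p, v)) v x by case/andP.
move: x rvx; apply: reach_ind; first by rewrite !connect0.
move=> z z' _ zz' /andP [rvz r'vz]; rewrite (reach_step rvz zz') /=.
have [E|ne] := eqVneq (z, z') (p, v).
  by case: E => E1 E2; subst; move: (ac _ _ pv); rewrite rvz.
by rewrite (reach_step r'vz) // !inE ne.
Qed.

Section Remove.
Variables (F : {set 'I_n * 'I_n}) (p v : 'I_n).
Hypotheses (fF : out_forest a F) (pv : (p, v) \in F).
Let F' := F :\ (p, v).

Lemma rm_forest : out_forest a F'.
Proof. by apply: forest_sub fF _; apply: subD1set. Qed.

Lemma rm_root : v \in roots_of F'.
Proof.
case/out_forestP: fF => _ d1 _.
apply/rootsP => u; rewrite !inE negb_and negbK; apply/orP.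
by case uv: ((u, v) \in F); [left; rewrite (d1 _ _ _ uv pv) | right].
Qed.

Lemma rm_roots j : j \in roots_of F -> j \in roots_of F'.
Proof. by move=> /rootsP rj; apply/rootsP => u; rewrite !inE (negbTE (rj u)) andbF. Qed.

Lemma rm_tree1 x j : in_tree_of F x j -> ~~ reach F v x -> in_tree_of F' x j.
Proof. by move=> /andP [rj rjx] nvx; rewrite /in_tree_of rm_roots // reach_rm. Qed.

Lemma rm_tree2 x : reach F v x -> in_tree_of F' x v.
Proof.
case/out_forestP: fF => _ _ ac rvx.
by rewrite /in_tree_of rm_root reach_rm2.
Qed.
End Remove.

Section Add.
Variables (F : {set 'I_n * 'I_n}) (u v : 'I_n).
Hypotheses (fF : out_forest a F) (rv : v \in roots_of F) (uv : (u, v) \in arcs a)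
  (nvu : ~~ reach F v u).
Let G := (u, v) |: F.

Lemma add_notin : (u, v) \notin F.
Proof. by move/rootsP: rv. Qed.

Lemma add_forest : out_forest a G.
Proof.
case/out_forestP: fF => sF d1 ac; apply/out_forestP; split.
- by rewrite subUset sub1set uv.
- move=> x y z; rewrite !inE => /orP [/eqP E1|xz] /orP [/eqP E2|yz].
  + by case: E1 E2 => -> _ [-> _].
  + by case: E1 => _ E; subst; move/rootsP: rv => /(_ y); rewrite yz.
  + by case: E2 => _ E; subst; move/rootsP: rv => /(_ x); rewrite xz.
  + exact: d1 xz yz.
- exact: acyc_add.
Qed.

Lemma add_card : #|G| = #|F|.+1.
Proof. by rewrite cardsU1 add_notin. Qed.

Lemma add_roots j : j \in roots_of F -> j != v -> j \in roots_of G.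
Proof.
move=> /rootsP rj njv; apply/rootsP => w; rewrite !inE negb_or (rj w) andbT.
by apply: contra njv => /eqP [_ ->].
Qed.

Lemma add_tree1 x j : in_tree_of F x j -> j != v -> in_tree_of G x j.
Proof.
move=> /andP [rj rjx] njv; rewrite /in_tree_of add_roots //=.
by apply: reach_sub rjx; apply: subsetUr.
Qed.

Lemma add_tree2 x j : reach F v x -> in_tree_of F u j -> in_tree_of G x j.
Proof.
move=> rvx /andP [rj rju].
have njv : j != v by apply: contra nvu => /eqP <-.
rewrite /in_tree_of add_roots //=.
apply: connect_trans (reach_sub (subsetUr _ _) rju) _.
apply: connect_trans (connect1 _) (reach_sub (subsetUr _ _) rvx).
by rewrite /frel_of !inE eqxx.
Qed.
End Add.

Lemma card_roots F : out_forest a F -> #|roots_of F| + #|F| = n.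
Proof.
case/out_forestP => _ d1 _.
have inj : {in F &, injective (fun e : 'I_n * 'I_n => e.2)}.
  by move=> [x z] [y w] /= xz yw E; subst; rewrite (d1 _ _ _ xz yw).
rewrite -(card_in_imset inj).
have -> : [set e.2 | e in F] = ~: roots_of F.
  apply/setP => w; rewrite in_setC; apply/imsetP/idP.
    by case=> [[x z]] xz /= ->; apply/negP => /rootsP /(_ x); rewrite xz.
  move=> nr; case: (pickP (fun x => (x, w) \in F)) => [x xw|none]; first by exists (x, w).
  by case/negP: nr; apply/rootsP => u; rewrite none.
by rewrite cardsC card_ord.
Qed.

End Forest.

Section Max.
Variables (R : realFieldType) (n : nat) (a : 'M[R]_n).
Implicit Types (F G H : {set 'I_n * 'I_n}) (x y z u v p j k c l : 'I_n).
Notation reach F := (connect (frel_of F)).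
Notation MF := (max_out_forest a).

Lemma mof_forest F : MF F -> out_forest a F.
Proof. by case/andP. Qed.

Lemma mof_max F G : MF F -> out_forest a G -> (#|G| <= #|F|)%N.
Proof. by case/andP => _ /forallP /(_ G) /implyP; apply. Qed.

Lemma mof_same F G : MF F -> out_forest a G -> #|G| = #|F| -> MF G.
Proof.
move=> mF fG cG; rewrite /max_out_forest fG cG /=.
by apply/forallP => H; apply/implyP => fH; apply: mof_max mF fH.
Qed.

Lemma mof_card F G : MF F -> MF G -> #|F| = #|G|.
Proof.
move=> mF mG; apply/eqP; rewrite eqn_leq (mof_max mG (mof_forest mF)).
by rewrite (mof_max mF (mof_forest mG)).
Qed.

Lemma forest0 : out_forest a set0.
Proof.
apply/out_forestP; split; first exact: sub0set.
  by move=> x y z; rewrite inE.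
by move=> x y; rewrite inE.
Qed.

Lemma mof_exists : exists F, MF F.
Proof.
case: (@arg_maxnP _ set0 (out_forest a) (fun F => #|F|) forest0) => F fF Fmax.
exists F; rewrite /max_out_forest fF /=.
by apply/forallP => G; apply/implyP => fG; apply: Fmax.
Qed.

Section Swap.
Variables (F : {set 'I_n * 'I_n}) (p v u : 'I_n).
Hypotheses (mF : MF F) (pv : (p, v) \in F) (uv : (u, v) \in arcs a)
  (nvu : ~~ reach F v u).
Let F' := F :\ (p, v).
Let fF := mof_forest mF.
Let fF' : out_forest a F' := rm_forest p v fF.
Let rv : v \in roots_of F' := rm_root fF pv.
Let nvu' : ~~ reach F' v u.
Proof. by apply: contra nvu; apply: reach_sub; apply: subD1set. Qed.

Lemma swap_max : MF ((u, v) |: F').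
Proof.
apply: mof_same mF (add_forest fF' rv uv nvu') _.
by rewrite (add_card u rv) (cardsD1 (p, v) F) pv.
Qed.

Lemma swap_tree1 x j : in_tree_of F x j -> ~~ reach F v x ->
  in_tree_of ((u, v) |: F') x j.
Proof.
move=> tj nvx; apply: (add_tree1 u) => //; first exact: rm_tree1.
case/andP: tj => /rootsP rj _; apply: contraTneq pv => <-.
exact: rj p.
Qed.

Lemma swap_tree2 x j : reach F v x -> in_tree_of F u j ->
  in_tree_of ((u, v) |: F') x j.
Proof.
move=> rvx tj; apply: (add_tree2 nvu').
  by case/out_forestP: fF => _ _ ac; apply: reach_rm2.
exact: rm_tree1.
Qed.
End Swap.

Section Reroot.
Variables (F : {set 'I_n * 'I_n}) (p c k : 'I_n).
Hypotheses (mF : MF F) (rk : k \in roots_of F) (ck : (c, k) \in arcs a)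
  (pc : (p, c) \in F) (rkc : reach F k c).
Let F' := F :\ (p, c).
Let fF := mof_forest mF.
Let fF' : out_forest a F' := rm_forest p c fF.
Let rc : c \in roots_of F' := rm_root fF pc.
Let rk' : k \in roots_of F' := rm_roots p c rk.
Let nck : c != k.
Proof. by move: ck; rewrite inE => /andP []. Qed.
Let nkc' : ~~ reach F' k c.
Proof. by apply/negP => /(root_reach rc) E; move: nck; rewrite E eqxx. Qed.

Lemma reroot_max : MF ((c, k) |: F').
Proof.
apply: mof_same mF (add_forest fF' rk' ck nkc') _.
by rewrite (add_card c rk') (cardsD1 (p, c) F) pc.
Qed.

Lemma reroot_tree x : in_tree_of F x k -> in_tree_of ((c, k) |: F') x c.
Proof.
move=> tk; case rcx: (reach F c x).
  by apply: (add_tree1 c); [exact: (rm_tree2 fF pc rcx) | exact: nck].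
have /andP [_ r'kx] := rm_tree1 p tk (negbT rcx).
exact: (add_tree2 nkc' r'kx (tree_root rc)).
Qed.
End Reroot.

Lemma fact l j : reach (arcs a) l j ->
  forall F, MF F -> j \in roots_of F -> reach F j l.
Proof.
move=> /connectP [q pq E].
elim: q l pq E => [|l' q IH] l /=; first by move=> _ -> F _ _; apply: connect0.
move=> /andP [ll' pq] E F mF rj.
have rjl' := IH l' pq E F mF rj.
case rjl: (reach F j l) => //; exfalso.
have fF := mof_forest mF.
have [Ej|nj] := eqVneq l' j.
  subst l'.
  have := mof_max mF (add_forest fF rj ll' (negbT rjl)).
  by rewrite (add_card l rj) ltnn.
have nl'j : j != l' by rewrite eq_sym.
case: (reach_last rjl' nl'j) => p pl' _.
have nl'l : ~~ reach F l' l.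
  by apply: contra (negbT rjl) => r; apply: connect_trans rjl' r.
have mG := swap_max mF pl' ll' nl'l.
have tjG : in_tree_of ((l, l') |: (F :\ (p, l'))) j j.
  apply: swap_tree1 => //; first exact: tree_root.
  by apply/negP => /(root_reach rj) E'; move: nj; rewrite E' eqxx.
case/andP: tjG => rjG _.
have tl'G : in_tree_of ((l, l') |: (F :\ (p, l'))) l' j.
  by rewrite /in_tree_of rjG; apply: IH.
case/out_forestP: fF => _ _ ac.
case: (tree_ex l ac) => rho trho.
have := swap_tree2 mF pl' nl'l (connect0 _ l') trho.
case/out_forestP: (mof_forest mG) => _ d1G _.
move=> /(tree_uniq d1G tl'G) E'; subst rho.
by case/andP: trho => _; rewrite rjl.
Qed.

End Max.

Local Open Scope ring_scope.

Section Generic.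
Variable R : realFieldType.

Lemma sum_ind (I : finType) (C b : pred I) (f : I -> R) :
  \sum_(q | C q) f q * (b q)%:R = \sum_(q | C q && b q) f q.
Proof. by rewrite big_mkcondr /=; apply: eq_bigr => q _; case: (b q); rewrite ?mulr1 ?mulr0. Qed.

Lemma sum_rm0 (I : finType) (C D : pred I) (f : I -> R) :
  (forall q, C q -> ~~ D q -> f q = 0) ->
  \sum_(q | C q) f q = \sum_(q | C q && D q) f q.
Proof.
move=> H; rewrite big_mkcondr /=; apply: eq_bigr => q Cq.
by case Dq: (D q) => //; rewrite H // Dq.
Qed.

Lemma sum_le_inj (I J : finType) (P : pred I) (Q : pred J) (f : I -> R) (g : J -> R)
  (h : I -> J) :
  (forall j, Q j -> 0 <= g j) -> {in P &, injective h} ->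
  (forall i, P i -> Q (h i) /\ g (h i) = f i) ->
  \sum_(i | P i) f i <= \sum_(j | Q j) g j.
Proof.
move=> g0 hinj hP.
rewrite (eq_bigr (fun i => g (h i))); last by move=> i /hP [].
rewrite -(big_imset _ hinj) /= big_mkcond [X in _ <= X]big_mkcond /=.
apply: ler_sum => j; case: ifP => [/imsetP [i Pi ->]|_].
  by rewrite (proj1 (hP i Pi)).
by case: ifP => // /g0.
Qed.

Lemma all_le0 (I : finType) (x : I -> R) :
  (forall i, x i <= 0) -> \sum_i x i = 0 -> forall i, x i = 0.
Proof.
move=> le0 s0 i; apply/eqP; rewrite -oppr_eq0; apply/eqP.
move: i isT; apply: psumr_eq0P => [i _|]; first by rewrite oppr_ge0.
by rewrite sumrN s0 oppr0.
Qed.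

Lemma fin_max (T : finType) (f : T -> R) (x0 : T) : exists x, forall y, f y <= f x.
Proof.
suff [x _ H] : exists2 x, x \in x0 :: enum T & forall y, y \in x0 :: enum T -> f y <= f x.
  by exists x => y; apply: H; rewrite inE mem_enum orbT.
elim: (enum T) => [|y s [x xin H]]; first by exists x0 => [|y]; rewrite ?inE // => /eqP ->.
have [fyx|fxy] := lerP (f y) (f x).
  exists x; first by move: xin; rewrite !inE => /orP [->|->]; rewrite ?orbT.
  by move=> z; rewrite !inE => /or3P [/eqP ->|/eqP ->|zs]; [apply: H; rewrite inE eqxx | | apply: H; rewrite inE zs orbT].
exists y; first by rewrite !inE eqxx orbT.
move=> z; rewrite !inE => /or3P [/eqP ->|/eqP ->|zs]; first 2 last.
- by apply: le_trans (ltW fxy); apply: H; rewrite inE zs orbT.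
- by apply: le_trans (ltW fxy); apply: H; rewrite inE eqxx.
- by [].
Qed.

Lemma rank_idem n (A : 'M[R]_n) : A *m A = A -> (\rank A)%:R = \tr A.
Proof.
move=> AA.
move: (col_base A) (row_base A) (col_base_full A) (row_base_free A) (mulmx_base A).
move=> C B fC fB E.
have BCB : (B *m C) *m B = 1%:M *m B.
  apply: (row_full_inj fC); rewrite mul1mx E !mulmxA E -mulmxA E AA.
  done.
have BCe : B *m C = 1%:M := row_free_inj fB BCB.
have -> : \tr A = \tr (C *m B) by rewrite E.
by rewrite mxtrace_mulC BCe mxtrace1.
Qed.

End Generic.

Section Main.
Variables (R : realFieldType) (n : nat) (a : 'M[R]_n).
Hypothesis ha : forall i j : 'I_n, i != j -> 0 <= a i j.
Implicit Types (F G H : {set 'I_n * 'I_n}) (x y z u v p j k c l i : 'I_n).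
Notation reach F := (connect (frel_of F)).
Notation MF := (max_out_forest a).
Notation w := (weight a).

Definition sig := \sum_(F | MF F) w F.
Definition W i j := \sum_(F | MF F) w F * (in_tree_of F i j)%:R.

Lemma arcsE u v : ((u, v) \in arcs a) = (u != v) && (a v u != 0).
Proof. by rewrite inE. Qed.

Lemma arc_pos u v : (u, v) \in arcs a -> 0 < a v u.
Proof. by rewrite arcsE => /andP [uv nz]; rewrite lt_def nz ha // eq_sym. Qed.

Lemma w_pos F : out_forest a F -> 0 < w F.
Proof.
case/out_forestP => sF _ _; apply: prodr_gt0 => [[x y]] /(subsetP sF) /=.
exact: arc_pos.
Qed.

Lemma w_ge0 F : MF F -> 0 <= w F.
Proof. by move/mof_forest/w_pos/ltW. Qed.

Lemma sig_pos : 0 < sig.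
Proof.
case: (mof_exists a) => F0 m0.
rewrite /sig (bigD1 F0) //= ltr_wpDr ?w_pos ?(mof_forest m0) //.
by apply: sumr_ge0 => F /andP [mF _]; apply: w_ge0.
Qed.

Lemma JE i j : Jbar a i j = W i j / sig.
Proof.
by rewrite mxE /W -sum_ind.
Qed.

Lemma sum_delta (T : finType) (j0 : T) : \sum_j ((j == j0)%:R : R) = 1.
Proof. by rewrite (bigD1 j0) //= eqxx big1 ?addr0 // => j /negbTE ->. Qed.

Lemma tree_sum F i : out_forest a F -> \sum_j ((in_tree_of F i j)%:R : R) = 1.
Proof.
case/out_forestP => _ d1 ac; case: (tree_ex i ac) => j0 t0.
rewrite -[RHS](sum_delta j0); apply: eq_bigr => j _.
rewrite (_ : in_tree_of F i j = (j == j0)) //.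
apply/idP/eqP => [tj|->//]; exact: (tree_uniq d1 tj t0).
Qed.

Lemma W_rowsum i : \sum_j W i j = sig.
Proof.
rewrite /W exchange_big /=; apply: eq_bigr => F mF.
by rewrite -mulr_sumr tree_sum ?mulr1 // mof_forest.
Qed.

Lemma J_rowsum i : \sum_j Jbar a i j = 1.
Proof.
under eq_bigr do rewrite JE.
by rewrite -mulr_suml W_rowsum divff // gt_eqF // sig_pos.
Qed.

Lemma kE i k : kirchhoff a i k = if i == k then \sum_(k' | k' != i) a i k' else - a i k.
Proof. by rewrite mxE. Qed.

Lemma L_rowsum i : \sum_k kirchhoff a i k = 0.
Proof.
rewrite (bigD1 i) //= kE eqxx.
rewrite [X in _ + X](eq_bigr (fun k => - a i k)) => [|k nki]; last by rewrite kE eq_sym (negbTE nki).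
by rewrite sumrN subrr.
Qed.

Definition par F v := odflt v [pick u | (u, v) \in F].

Lemma parE F u v : indeg1 F -> (u, v) \in F -> par F v = u.
Proof.
move=> d1 uv; rewrite /par; case: pickP => [x xv|none] /=; first exact: d1 xv uv.
by move: (none u); rewrite uv.
Qed.

Lemma par_in F v : v \notin roots_of F -> (par F v, v) \in F.
Proof.
move=> nr; rewrite /par; case: pickP => [x xv //|none].
by case/negP: nr; apply/rootsP => u; rewrite none.
Qed.

Lemma forest_parts F : out_forest a F -> [/\ F \subset arcs a, indeg1 F & acyc F].
Proof. by move/out_forestP. Qed.

Lemma B1map i j k F : k != i -> a i k != 0 -> MF F -> in_tree_of F i j ->
  ~~ in_tree_of F k j ->
  [/\ (par F i, i) \in F, (k, i) \notin F :\ (par F i, i), par F i != i,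
      MF ((k, i) |: (F :\ (par F i, i))) &
      in_tree_of ((k, i) |: (F :\ (par F i, i))) (par F i) j &&
      ~~ in_tree_of ((k, i) |: (F :\ (par F i, i))) i j].
Proof.
move=> nki aik mF tij ntkj.
have fF := mof_forest mF; case/forest_parts: (fF) => sF d1 ac.
have ki : (k, i) \in arcs a by rewrite arcsE nki.
have nik : ~~ reach F i k by apply: contra ntkj; apply: tree_reach.
have nri : i \notin roots_of F.
  by apply: contra nik => ri; apply: (fact (connect1 ki) mF ri).
set p := par F i; have pi : (p, i) \in F := par_in nri.
have npi : p != i by move: (subsetP sF _ pi); rewrite arcsE => /andP [].
have tpj : in_tree_of F p j.
  case: (tree_ex p ac) => rho tp.
  by rewrite (tree_uniq d1 tij (tree_reach tp (connect1 pi))).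
have mG := swap_max mF pi ki nik.
split=> //; last (apply/andP; split).
- rewrite !inE negb_and negbK; apply/orP; case ki': ((k, i) \in F); last by right.
  by left; rewrite (d1 _ _ _ ki' pi).
- by apply: (swap_tree1 k pi tpj); apply: ac.
- case: (tree_ex k ac) => rho tk.
  have tiG := swap_tree2 mF pi nik (connect0 _ i) tk.
  apply/negP => tiG'; case/forest_parts: (mof_forest mG) => _ d1G _.
  by move: ntkj; rewrite -(tree_uniq d1G tiG tiG') tk.
Qed.

Lemma w_D1 F e : e \in F -> w F = a e.2 e.1 * w (F :\ e).
Proof. by move=> eF; rewrite /weight (big_setD1 e eF). Qed.

Lemma w_U1 F e : e \notin F -> w (e |: F) = a e.2 e.1 * w F.
Proof. by move=> eF; rewrite /weight (big_setU1 e eF). Qed.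

Lemma B1core i j :
  \sum_(q : 'I_n * {set 'I_n * 'I_n} | (q.1 != i) && MF q.2 &&
           (in_tree_of q.2 i j && ~~ in_tree_of q.2 q.1 j)) a i q.1 * w q.2
  <= \sum_(q : 'I_n * {set 'I_n * 'I_n} | (q.1 != i) && MF q.2 &&
           (in_tree_of q.2 q.1 j && ~~ in_tree_of q.2 i j)) a i q.1 * w q.2.
Proof.
rewrite (@sum_rm0 _ _ _ (fun q => a i q.1 != 0)) => [|q _]; last first.
  by move/negPn/eqP => ->; rewrite mul0r.
apply: (@sum_le_inj _ _ _ _ _ _ _
  (fun q => (par q.2 i, (q.1, i) |: (q.2 :\ (par q.2 i, i))))).
- move=> [k F] /= /andP [/andP [nki mF] _].
  by rewrite mulr_ge0 ?w_ge0 ?ha // eq_sym.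
- move=> [k1 F1] [k2 F2]; rewrite !unfold_in /=.
  move=> /andP [/andP [/andP [nk1 m1] /andP [t1 nt1]] a1].
  move=> /andP [/andP [/andP [nk2 m2] /andP [t2 nt2]] a2] [E1 E2].
  have [pi1 ni1 _ mG1 _] := B1map nk1 a1 m1 t1 nt1.
  have [pi2 ni2 _ _ _] := B1map nk2 a2 m2 t2 nt2.
  case/forest_parts: (mof_forest mG1) => _ d1G _.
  have k12 : k1 = k2.
    apply: (d1G _ _ i); first by rewrite !inE eqxx.
    by rewrite E2 !inE eqxx.
  subst k2; rewrite E1 in E2 ni1 pi1.
  have := congr1 (fun X => X :\ (k1, i)) E2; rewrite /= !setU1K // => E3.
  by rewrite -(setD1K pi1) E3 setD1K.
- move=> [k F] /= /andP [/andP [/andP [nki mF] /andP [tij ntkj]] aik].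
  have [pi ni npi mG /andP [tpj ntij]] := B1map nki aik mF tij ntkj.
  rewrite /= npi mG tpj ntij; split=> //.
  rewrite w_U1 // (w_D1 pi) /=; ring.
Qed.

Lemma LW_le0 i j : \sum_k kirchhoff a i k * W k j <= 0.
Proof.
have -> : \sum_k kirchhoff a i k * W k j =
    \sum_(k | k != i) (a i k * W i j - a i k * W k j).
  rewrite (bigD1 i) //= kE eqxx mulr_suml sumrB.
  congr (_ + _); rewrite -sumrN; apply: eq_bigr => k nki.
  by rewrite kE eq_sym (negbTE nki) mulNr.
have -> : \sum_(k | k != i) (a i k * W i j - a i k * W k j) =
    \sum_(k | k != i) \sum_(F | MF F)
      (a i k * w F * (in_tree_of F i j && ~~ in_tree_of F k j)%:R -
       a i k * w F * (in_tree_of F k j && ~~ in_tree_of F i j)%:R).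
  apply: eq_bigr => k _; rewrite -mulrBr /W -sumrB mulr_sumr.
  apply: eq_bigr => F _.
  by case: (in_tree_of F i j); case: (in_tree_of F k j); rewrite /= ?mulr0 ?mulr1; ring.
rewrite pair_big /= sumrB !sum_ind subr_le0.
exact: B1core.
Qed.

Lemma B2map i c k G : k != c -> a k c != 0 -> MF G -> in_tree_of G i k ->
  [/\ (par G c, c) \in G, (c, k) \notin G :\ (par G c, c), par G c != c,
      MF ((c, k) |: (G :\ (par G c, c))) &
      in_tree_of ((c, k) |: (G :\ (par G c, c))) i c].
Proof.
move=> nkc akc mG tik.
have fG := mof_forest mG; case/forest_parts: (fG) => sG d1 ac.
have ck : (c, k) \in arcs a by rewrite arcsE eq_sym nkc.
have rk : k \in roots_of G by case/andP: tik.
have rkc := fact (connect1 ck) mG rk.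
have nrc : c \notin roots_of G.
  by apply/negP => rc; move: nkc; rewrite (root_reach rc rkc) eqxx.
have pc := par_in nrc.
split=> //.
- by move/rootsP: rk => /(_ c) /negbTE nck; rewrite !inE nck andbF.
- by move: (subsetP sG _ pc); rewrite arcsE => /andP [].
- exact: reroot_max mG rk ck pc.
- have := reroot_tree mG ck pc tik. move=> H. exact H.
Qed.

Lemma B2core i c :
  \sum_(q : 'I_n * {set 'I_n * 'I_n} | (q.1 != c) && MF q.2 && in_tree_of q.2 i q.1)
     a q.1 c * w q.2
  <= \sum_(q : 'I_n * {set 'I_n * 'I_n} | (q.1 != c) && MF q.2 && in_tree_of q.2 i c)
     a c q.1 * w q.2.
Proof.
rewrite (@sum_rm0 _ _ _ (fun q => a q.1 c != 0)) => [|q _]; last first.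
  by move/negPn/eqP => ->; rewrite mul0r.
apply: (@sum_le_inj _ _ _ _ _ _ _
  (fun q => (par q.2 c, (c, q.1) |: (q.2 :\ (par q.2 c, c))))).
- move=> [x F] /= /andP [/andP [nxc mF] _].
  by rewrite mulr_ge0 ?w_ge0 ?ha // eq_sym.
- move=> [k1 G1] [k2 G2]; rewrite !unfold_in /=.
  move=> /andP [/andP [/andP [nk1 m1] t1] a1].
  move=> /andP [/andP [/andP [nk2 m2] t2] a2] [E1 E2].
  have [pc1 ni1 _ _ _] := B2map nk1 a1 m1 t1.
  have [pc2 ni2 _ _ _] := B2map nk2 a2 m2 t2.
  rewrite E1 in E2 ni1 pc1.
  move: E2 ni1 ni2 pc1 pc2; set p := par G2 c => E2 ni1 ni2 pc1 pc2.
  have [Ek|nk12] := eqVneq k1 k2.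
    subst k2; f_equal.
    have := congr1 (fun X => X :\ (c, k1)) E2; rewrite /= !setU1K // => E3.
    by rewrite -(setD1K pc1) E3 setD1K.
  exfalso.
  have fG1 := mof_forest m1; case/forest_parts: (fG1) => sG1 d11 ac1.
  have fG2 := mof_forest m2; case/forest_parts: (fG2) => sG2 d12 ac2.
  have c2in1 : (c, k2) \in G1 :\ (p, c).
    have : (c, k2) \in (c, k1) |: (G1 :\ (p, c)) by rewrite E2 !inE eqxx.
    by rewrite in_setU1 xpair_eqE eqxx /= (eq_sym k2) (negbTE nk12).
  have c1in2 : (c, k1) \in G2.
    have : (c, k1) \in (c, k2) |: (G2 :\ (p, c)) by rewrite -E2 !inE eqxx.
    rewrite !inE xpair_eqE eqxx /= (negbTE nk12) /=.
    by case/andP.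
  have ck1 : (c, k1) \in arcs a by rewrite arcsE eq_sym nk1.
  have rk1 : k1 \in roots_of G1 by case/andP: t1.
  have rk1c := fact (connect1 ck1) m1 rk1.
  case: (reach_last rk1c nk1) => q qc rk1q.
  rewrite (d11 _ _ _ qc pc1) in rk1q.
  have ncp1 : ~~ reach G1 c p by apply: ac1.
  have nk2p : ~~ reach G1 k2 p.
    apply: contra ncp1 => r; apply: connect_trans (connect1 _) r.
    by move: c2in1; rewrite !inE => /andP [].
  have r1 : reach (G1 :\ (p, c)) k1 p := reach_rm p ncp1 rk1q.
  have nk2p' : ~~ reach (G1 :\ (p, c)) k2 p.
    by apply: contra nk2p; apply: reach_sub; apply: subD1set.
  have r2 := reach_rm c nk2p' r1.
  have sub : (G1 :\ (p, c)) :\ (c, k2) \subset G2.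
    apply/subsetP => e; rewrite in_setD1 => /andP [ne eX1].
    have : e \in (c, k1) |: (G1 :\ (p, c)) by rewrite in_setU1 eX1 orbT.
    rewrite E2 in_setU1 (negbTE ne) /=.
    by rewrite in_setD1 => /andP [].
  have r3 := reach_sub sub r2.
  by move: (ac2 _ _ c1in2); rewrite (reach_step r3 pc2).
- move=> [k G] /= /andP [/andP [/andP [nkc mG] tik] akc].
  have [pc ni npc mH tH] := B2map nkc akc mG tik.
  rewrite /= npc mH tH; split=> //.
  rewrite w_U1 // (w_D1 pc) /=; ring.
Qed.

Lemma WL_ge0 i c : 0 <= \sum_k W i k * kirchhoff a k c.
Proof.
have -> : \sum_k W i k * kirchhoff a k c =
    \sum_(x | x != c) a c x * W i c - \sum_(k | k != c) a k c * W i k.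
  rewrite (bigD1 c) //= kE eqxx mulr_sumr.
  congr (_ + _); first by apply: eq_bigr => x _; rewrite mulrC.
  rewrite -sumrN; apply: eq_bigr => k nkc.
  by rewrite kE (negbTE nkc) mulrN mulrC.
rewrite subr_ge0 /W.
under eq_bigr do rewrite mulr_sumr.
under [X in _ <= X]eq_bigr do rewrite mulr_sumr.
rewrite !pair_big /=.
under eq_bigr do rewrite mulrA.
under [X in _ <= X]eq_bigr do rewrite mulrA.
rewrite !sum_ind.
exact: B2core.
Qed.

Lemma LJ0 : kirchhoff a *m Jbar a = 0.
Proof.
apply/matrixP => i j; rewrite [RHS]mxE.
move: j; apply: all_le0 => [j|].
  rewrite mxE; under eq_bigr do rewrite JE mulrA.
  by rewrite -mulr_suml ler_pdivrMr ?sig_pos // mul0r LW_le0.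
under eq_bigr do rewrite mxE.
rewrite exchange_big /=.
under eq_bigr do rewrite -mulr_sumr J_rowsum mulr1.
exact: L_rowsum.
Qed.

Lemma JL0 : Jbar a *m kirchhoff a = 0.
Proof.
apply/matrixP => i j; rewrite [RHS]mxE.
apply/eqP; rewrite -oppr_eq0; apply/eqP; move: j.
apply: (all_le0 (x := fun j => - (Jbar a *m kirchhoff a) i j)) => [j|].
  rewrite mxE oppr_le0; under eq_bigr do rewrite JE mulrAC.
  by rewrite -mulr_suml divr_ge0 ?WL_ge0 // ltW // sig_pos.
under eq_bigr do rewrite mxE.
rewrite sumrN exchange_big /= big1 ?oppr0 // => k _.
by rewrite -mulr_sumr L_rowsum mulr0.
Qed.

Lemma kerinj F (v : 'I_n -> R) : out_forest a F ->
  (forall i, \sum_k kirchhoff a i k * v k = 0) ->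
  (forall j, j \in roots_of F -> v j = 0) -> forall i, v i = 0.
Proof.
move=> fF Lv v0 i.
case/forest_parts: (fF) => sF d1 ac.
case: (fin_max (fun y => `|v y|) i) => m /= mmax.
set M := `|v m| in mmax *.
suff M0 : M = 0.
  by apply/eqP; rewrite -normr_eq0 eq_le normr_ge0 andbT -M0 mmax.
have cl z y : `|v z| = M -> (y, z) \in F -> `|v y| = M.
  move=> vz yz.
  have apos : 0 < a z y by apply: arc_pos; apply: (subsetP sF).
  have nyz : y != z by move: (subsetP sF _ yz); rewrite arcsE => /andP [].
  have E : (\sum_(k | k != z) a z k) * v z = \sum_(k | k != z) a z k * v k.
    move: (Lv z); rewrite (bigD1 z) //= kE eqxx => /eqP; rewrite addr_eq0 => /eqP ->.
    rewrite -sumrN; apply: eq_bigr => k nkz.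
    by rewrite kE eq_sym (negbTE nkz) mulNr opprK.
  have S0 : 0 <= \sum_(k | k != z) a z k.
    by apply: sumr_ge0 => k nkz; apply: ha; rewrite eq_sym.
  have le : \sum_(k | k != z) a z k * (M - `|v k|) <= 0.
    rewrite (eq_bigr (fun k => a z k * M - a z k * `|v k|)); last by move=> k _; rewrite mulrBr.
    rewrite sumrB -mulr_suml subr_le0 -vz.
    rewrite -(ger0_norm S0) -normrM E.
    apply: le_trans (ler_norm_sum _ _ _) _.
    by apply: ler_sum => k nkz; rewrite normrM ger0_norm // ha // eq_sym.
  have ge : forall k, k != z -> 0 <= a z k * (M - `|v k|).
    by move=> k nkz; rewrite mulr_ge0 ?ha 1?eq_sym // subr_ge0 mmax.
  have := psumr_eq0P ge; move/(_ (le_anti _)); rewrite le sumr_ge0 //.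
  move=> /(_ isT y nyz) /eqP; rewrite mulf_eq0 (gt_eqF apos) /= subr_eq0 => /eqP.
  by move=> ->.
case: (tree_ex m ac) => rho /andP [rrho rrm].
have H : forall x, reach F rho x -> `|v x| = M -> `|v rho| = M.
  apply: reach_ind => // y z _ yz IH vz.
  by apply: IH; apply: cl vz yz.
by move: (H m rrm erefl); rewrite v0 // normr0.
Qed.

Lemma reach_arcs F x y : out_forest a F -> reach F x y -> reach (arcs a) x y.
Proof. by case/forest_parts => sF _ _; apply: reach_sub. Qed.

Lemma rows_eq F0 j l : MF F0 -> j \in roots_of F0 -> Jbar a j l != 0 ->
  forall c, Jbar a l c = Jbar a j c.
Proof.
move=> m0 rj nz c.
have [G0 /andP [mG0 tG0]] : exists G0, MF G0 && in_tree_of G0 j l.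
  case: (pickP (fun G => MF G && in_tree_of G j l)) => [G0 H|none]; first by exists G0.
  move: nz; rewrite JE /W big1 ?mul0r ?eqxx // => G mG.
  by move: (none G); rewrite mG /= => ->; rewrite mulr0.
have rlj : reach (arcs a) l j.
  by case/andP: tG0 => _ r; apply: reach_arcs (mof_forest mG0) r.
rewrite !JE /W; congr (_ / _); apply: eq_bigr => G mG.
have fG := mof_forest mG; case/forest_parts: (fG) => _ d1 ac.
case: (tree_ex j ac) => rho tjr.
have rrj : reach (arcs a) rho j by case/andP: tjr => _ r; apply: reach_arcs fG r.
have rjr : reach (arcs a) j rho := reach_arcs (mof_forest m0) (fact rrj m0 rj).
have rrho : rho \in roots_of G by case/andP: tjr.
have tlr : in_tree_of G l rho.
  by rewrite /in_tree_of rrho (fact (connect_trans rlj rjr) mG rrho).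
suff -> : in_tree_of G l c = in_tree_of G j c by [].
apply/idP/idP => t.
  by rewrite -(tree_uniq d1 tlr t).
by rewrite -(tree_uniq d1 tjr t).
Qed.

Lemma JJ : Jbar a *m Jbar a = Jbar a.
Proof.
case: (mof_exists a) => F0 m0.
apply/eqP; rewrite -subr_eq0; apply/eqP/matrixP => r c; rewrite [RHS]mxE.
pose v r := (Jbar a *m Jbar a - Jbar a) r c.
apply: (@kerinj F0 v (mof_forest m0)) => [i|j rj].
  have : (kirchhoff a *m (Jbar a *m Jbar a - Jbar a)) i c = 0.
    by rewrite mulmxBr mulmxA LJ0 mul0mx subrr mxE.
  by rewrite mxE.
rewrite /v mxE mxE.
rewrite (eq_bigr (fun l => Jbar a j l * Jbar a j c)).
  by rewrite -mulr_suml J_rowsum mul1r [X in _ + X]mxE subrr.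
move=> l _; have [->|nz] := eqVneq (Jbar a j l) 0; first by rewrite !mul0r.
by rewrite (rows_eq m0 rj nz).
Qed.

Lemma trJ F : MF F -> \tr (Jbar a) = (#|roots_of F|)%:R.
Proof.
move=> mF.
rewrite /mxtrace; under eq_bigr do rewrite JE.
rewrite -mulr_suml /W exchange_big /=.
rewrite (eq_bigr (fun G => w G * (#|roots_of F|)%:R)).
  by rewrite -mulr_suml -/sig mulrAC divff ?mul1r // gt_eqF // sig_pos.
move=> G mG; rewrite -mulr_sumr; congr (_ * _).
have -> : #|roots_of F| = #|roots_of G|.
  have cF := card_roots (mof_forest mF); have cG := card_roots (mof_forest mG).
  have e := mof_card mF mG; lia.
rewrite -sumr_const [RHS]big_mkcond /=; apply: eq_bigr => i _.
by rewrite /in_tree_of connect0 andbT; case: (i \in roots_of G).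
Qed.

End Main.

Theorem proposition5 (R : realFieldType) (n : nat) (a : 'M[R]_n)
    (ha : forall i j : 'I_n, i != j -> 0 <= a i j) :
  (forall F : {set 'I_n * 'I_n}, max_out_forest a F ->
     \rank (Jbar a) = #|roots_of F|) /\
  Jbar a *m Jbar a = Jbar a /\
  kirchhoff a *m Jbar a = 0 /\
  Jbar a *m kirchhoff a = 0.
Proof.
split; last by split; [exact: JJ ha | split; [exact: LJ0 ha | exact: JL0 ha]].
move=> F mF; apply/eqP; rewrite -(eqr_nat R) (rank_idem (JJ ha)) (trJ ha mF).
by [].
Qed.
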